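(* Suppose $\phi_1,\phi_2$ satisfy the Doubrov–Ferapontov modified heavenly hierarchy $(\Phi_1\wedge\Phi_2)_-=0$. Define the vector fields $$T_n=\partial_{t_n}-\begin{vmatrix}\phi_{1,t_n}&\phi_{2,t_n}\\ \phi_{1,y}&\phi_{2,y}\end{vmatrix}_+\partial_x-\begin{vmatrix}\phi_{2,t_n}&\phi_{1,t_n}\\ \phi_{2,x}&\phi_{1,x}\end{vmatrix}_+\partial_y,\qquad Z_j=\lambda\partial_{z_j}-\begin{vmatrix}\lambda\phi_{1,z_j}&\lambda\phi_{2,z_j}\\ \phi_{1,y}&\phi_{2,y}\end{vmatrix}_+\partial_x-\begin{vmatrix}\lambda\phi_{2,z_j}&\lambda\phi_{1,z_j}\\ \phi_{2,x}&\phi_{1,x}\end{vmatrix}_+\partial_y$$ for $n,j\ge1$. Then $T_n\vec\phi=Z_j\vec\phi=0$ for all $n,j$, and the vector fields pairwise commute: $[T_n,T_s]=0$, $[T_n,Z_j]=0$, $[Z_i,Z_j]=0$ for all $n,s,i,j\ge1$.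
   Context: Independent variables are $x,y$ and two infinite families $t_1,t_2,\dots$ and $z_1,z_2,\dots$; write $t:=t_1$, $z:=z_1$. $\lambda$ is a formal spectral parameter. For a formal Laurent series $\sum_n a_n\lambda^n$, set $(\sum_n a_n\lambda^n)_+=\sum_{n\ge0}a_n\lambda^n$ and $(\sum_n a_n\lambda^n)_-=\sum_{n<0}a_n\lambda^n$; for a determinant, $|\cdot|_+$ denotes the $(\cdot)_+$ part of the determinant. Consider formal series $\phi_1=-y+\sum_{j\ge2}z_j\lambda^{j-1}+\sum_{k\ge1}g_k\lambda^{-k}$, $\phi_2=x+t_1\lambda+\sum_{n\ge2}t_n\lambda^n+\sum_{m\ge1}f_m\lambda^{-m}$, where $g_k,f_m$ are functions of $(x,y,t_1,t_2,\dots,z_1,z_2,\dots)$, and $\vec\phi=(\phi_1,\phi_2)^T$. Define the 1-forms $\Phi_i=\phi_{i,x}dx+\phi_{i,y}dy+\sum_{n\ge1}\phi_{i,t_n}dt_n+\lambda\sum_{j\ge1}\phi_{i,z_j}dz_j$ ($i=1,2$). The Doubrov–Ferapontov modified heavenly hierarchy is $(\Phi_1\wedge\Phi_2)_-=0$, meaning that the negative-power part (in $\lambda$) of the coefficient of every basis 2-form vanishes; explicitly, for variables $a,b$ among $x,y,t_n,z_j$, the coefficient of $da\wedge db$ is $\lambda^{\epsilon}\,\partial(\phi_1,\phi_2)/\partial(a,b)$, where $\partial(\phi_1,\phi_2)/\partial(a,b)=\phi_{1,a}\phi_{2,b}-\phi_{1,b}\phi_{2,a}$ and $\epsilon$ is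 the number of $z$-variables among $a,b$. Subscripts denote partial derivatives. *)

(* Defs.v *)
(* Formal Laurent series in the spectral parameter lambda with
   coefficients in a commutative differential ring A (commuting derivations
   indexed by the coordinates x, y, t_n, z_j). *)
From HB Require Import structures.
From mathcomp Require Import all_boot all_order all_algebra.
From Stdlib Require Import ClassicalEpsilon.
Set Implicit Arguments. Unset Strict Implicit. Unset Printing Implicit Defensive.
Import Order.TTheory GRing.Theory Num.Theory.
Local Open Scope ring_scope.

(* coordinates: x, y, t_n (ct n), z_j (cz j); only n, j >= 1 are used *)
Inductive hcoord := cx | cy | ct of nat | cz of nat.

Definition coord_eqb (a b : hcoord) : bool :=
  match a, b with
  | cx, cx => true | cy, cy => true
  | ct n, ct m => (n == m)%N | cz n, cz m => (n == m)%N
  | _, _ => false end.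

Definition valid_coord (c : hcoord) : bool :=
  match c with ct n => (0 < n)%N | cz n => (0 < n)%N | _ => true end.

Definition nz (c : hcoord) : nat := match c with cz _ => 1%N | _ => 0%N end.

Definition coordval (A : Type) (X Y : A) (T Z : nat -> A) (c : hcoord) : A :=
  match c with cx => X | cy => Y | ct n => T n | cz n => Z n end.

Definition coord_diff_ring (A : comPzRingType) (D : hcoord -> A -> A)
    (X Y : A) (T Z : nat -> A) : Prop :=
  [/\ (forall c a b, D c (a + b) = D c a + D c b),
      (forall c a b, D c (a * b) = D c a * b + a * D c b),
      (forall c c' a, D c (D c' a) = D c' (D c a)) &
      (forall c c', D c (coordval X Y T Z c') = if coord_eqb c c' then 1 else 0)].

(* formal (bi-infinite) series in lambda: coefficient of lambda^n *)
Definition ser (A : Type) := int -> A.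

Definition bounded_above (A : comPzRingType) (s : ser A) : Prop :=
  exists N : int, forall n : int, N < n -> s n = 0.

Definition sbound (A : comPzRingType) (s : ser A) : int :=
  epsilon (inhabits 0) (fun N : int => forall n : int, N < n -> s n = 0).

(* product of Laurent series in lambda^{-1} (finite sums) *)
Definition smul (A : comPzRingType) (a b : ser A) : ser A := fun n =>
  let N := sbound a in let M := sbound b in
  if n <= N + M then
    \sum_(i < absz (N + M - n + 1)) a (n - M + i%:Z) * b (M - i%:Z)
  else 0.

Definition sadd (A : comPzRingType) (a b : ser A) : ser A := fun n => a n + b n.
Definition ssub (A : comPzRingType) (a b : ser A) : ser A := fun n => a n - b n.
(* multiplication by lambda^e *)
Definition sshift (A : comPzRingType) (e : nat) (a : ser A) : ser A :=
  fun n => a (n - e%:Z).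
Definition spos (A : comPzRingType) (a : ser A) : ser A :=
  fun n => if 0 <= n then a n else 0.
Definition sneg (A : comPzRingType) (a : ser A) : ser A :=
  fun n => if n < 0 then a n else 0.
Definition sD (A : comPzRingType) (D : hcoord -> A -> A) (c : hcoord) (s : ser A) : ser A :=
  fun n => D c (s n).

Definition det2 (A : comPzRingType) (a b c d : ser A) : ser A :=
  ssub (smul a d) (smul b c).

(* phi_1 = -y + sum_{j>=2} z_j lambda^{j-1} + sum_{k>=1} g_k lambda^{-k} *)
Definition phi1 (A : comPzRingType) (Y : A) (Z : nat -> A) (g : nat -> A) : ser A :=
  fun n => if n == 0 then - Y else if 0 < n then Z (absz n).+1 else g (absz n).
(* phi_2 = x + sum_{n>=1} t_n lambda^n + sum_{m>=1} f_m lambda^{-m} *)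
Definition phi2 (A : comPzRingType) (X : A) (T : nat -> A) (f : nat -> A) : ser A :=
  fun n => if n == 0 then X else if 0 < n then T (absz n) else f (absz n).

Definition jac (A : comPzRingType) (D : hcoord -> A -> A) (p1 p2 : ser A) (a b : hcoord) : ser A :=
  det2 (sD D a p1) (sD D b p1) (sD D a p2) (sD D b p2).

Definition DF_hierarchy (A : comPzRingType) (D : hcoord -> A -> A) (p1 p2 : ser A) : Prop :=
  forall a b : hcoord, valid_coord a -> valid_coord b ->
    forall n : int, sneg (sshift (nz a + nz b) (jac D p1 p2 a b)) n = 0.

Definition lamD (A : comPzRingType) (D : hcoord -> A -> A) (c : hcoord) (s : ser A) : ser A :=
  sshift (nz c) (sD D c s).

Definition VF (A : comPzRingType) (D : hcoord -> A -> A) (p1 p2 : ser A) (c : hcoord)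
    (s : ser A) : ser A :=
  ssub (ssub (lamD D c s)
    (smul (spos (det2 (lamD D c p1) (lamD D c p2) (sD D cy p1) (sD D cy p2))) (sD D cx s)))
    (smul (spos (det2 (lamD D c p2) (lamD D c p1) (sD D cx p2) (sD D cx p1))) (sD D cy s)).

Definition Tvf (A : comPzRingType) D (p1 p2 : ser A) (n : nat) := VF D p1 p2 (ct n).
Definition Zvf (A : comPzRingType) D (p1 p2 : ser A) (j : nat) := VF D p1 p2 (cz j).

Definition vf_commute (A : comPzRingType) (V W : ser A -> ser A) : Prop :=
  forall u : ser A, bounded_above u -> forall n : int, V (W u) n = W (V u) n.

(* Main.v *)
Require Import Defs.
From mathcomp Require Import all_boot all_order all_algebra.
From HB Require Import structures.
From mathcomp Require Import zify ring.
From mathcomp Require Import boolp.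
From Stdlib Require Import ClassicalEpsilon FunctionalExtensionality ProofIrrelevance.
Import Order.TTheory GRing.Theory Num.Theory.
Local Open Scope ring_scope.

Ltac side := solve [ done | lia | (repeat match goal with x := _ |- _ => subst x end); lia ].

Section Ser.
Variable A : comPzRingType.
Implicit Types (a b c : ser A) (N M n : int) (F : int -> A).

Definition wsum (F : int -> A) (lo : int) (k : nat) := \sum_(i < k) F (lo + i%:Z).

Lemma wsum_grow F (lo : int) (k : nat) (lo' : int) (k' : nat) :
  lo' <= lo -> lo + k%:Z <= lo' + k'%:Z ->
  (forall p, p < lo -> F p = 0) -> (forall p, lo + k%:Z <= p -> F p = 0) ->
  wsum F lo' k' = wsum F lo k.
Proof.
move=> h1 h2 z1 z2.
pose j := absz (lo - lo'). pose r := absz ((lo' + k'%:Z - lo - k%:Z)%R).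
have -> : k' = (j + (k + r))%N by rewrite /j /r; lia.
rewrite /wsum big_split_ord /= big1 ?add0r; last first.
  move=> i _; apply: z1; have := ltn_ord i; rewrite /j; lia.
rewrite big_split_ord /= [X in _ + X]big1 ?addr0; last first.
  move=> i _; apply: z2; rewrite /j; lia.
apply: eq_bigr => i _; congr F; rewrite /j; lia.
Qed.

Lemma wsum_eq F (lo : int) (k : nat) (lo' : int) (k' : nat) :
  (forall p, p < lo -> F p = 0) -> (forall p, lo + k%:Z <= p -> F p = 0) ->
  (forall p, p < lo' -> F p = 0) -> (forall p, lo' + k'%:Z <= p -> F p = 0) ->
  wsum F lo k = wsum F lo' k'.
Proof.
move=> z1 z2 z3 z4.
pose m := lo - `|lo - lo'|%N%:Z.
pose K := (absz (lo - m) + k + absz (lo' - m) + k')%N.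
rewrite -(@wsum_grow F lo k m K) ?(@wsum_grow F lo' k' m K) //; rewrite /m /K; lia.
Qed.

Lemma sbound_spec a : bounded_above a -> forall n, sbound a < n -> a n = 0.
Proof.
move=> hb; rewrite /sbound.
by apply: (epsilon_spec (inhabits 0) (fun N : int => forall n : int, N < n -> a n = 0)).
Qed.

Lemma smulE a b N M n (lo : int) (k : nat) :
  (forall p, N < p -> a p = 0) -> (forall p, M < p -> b p = 0) ->
  lo <= n - M -> N < lo + k%:Z ->
  smul a b n = wsum (fun p => a p * b (n - p)) lo k.
Proof.
move=> ha hb h1 h2.
have ba : bounded_above a by exists N.
have bb : bounded_above b by exists M.
have ha' := @sbound_spec a ba; have hb' := @sbound_spec b bb.
set N' := sbound a in ha'; set M' := sbound b in hb'.
have zF1 : forall p, p < lo -> a p * b (n - p) = 0.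
  by move=> p hp; rewrite hb ?mulr0 //; lia.
have zF2 : forall p, lo + k%:Z <= p -> a p * b (n - p) = 0.
  by move=> p hp; rewrite ha ?mul0r //; lia.
rewrite /smul -/N' -/M'; case: ifP => hn.
  transitivity (wsum (fun p => a p * b (n - p)) (n - M') `|(N' + M' - n + 1)%R|%N).
    apply: eq_bigr => i _; congr (_ * b _); lia.
  apply: wsum_eq => // p hp.
    by rewrite hb' ?mulr0 //; lia.
  by rewrite ha' ?mul0r //; lia.
rewrite /wsum big1 // => i _.
case: (lerP (lo + i%:Z) N') => hi.
  by rewrite hb' ?mulr0 //; lia.
by rewrite ha' ?mul0r.
Qed.



Definition bnd a (N : int) := forall p, N < p -> a p = 0.

Lemma bnd_mono a N N' : N <= N' -> bnd a N -> bnd a N'.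
Proof. by move=> h ha p hp; apply: ha; lia. Qed.

Lemma bnd_bounded a N : bnd a N -> bounded_above a.
Proof. by move=> h; exists N. Qed.

Lemma bounded_bnd a : bounded_above a -> exists N, bnd a N.
Proof. by case=> N h; exists N. Qed.

Lemma smul_bnd a b N M : bnd a N -> bnd b M -> bnd (smul a b) (N + M).
Proof.
move=> ha hb n hn; rewrite (@smulE a b N M n (n - M) 0%N) ; try side.
by rewrite /wsum big_ord0.
Qed.

Lemma smulC a b N M : bnd a N -> bnd b M -> forall n, smul a b n = smul b a n.
Proof.
move=> ha hb n.
pose k := (`|(N + M - n)%R|%N).+1.
rewrite (@smulE a b N M n (n - M) k) ; try side.
rewrite (@smulE b a M N n (M + 1 - k%:Z) k) ; try side.
rewrite /wsum (reindex_inj rev_ord_inj); apply: eq_bigr => i _ /=.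
rewrite mulrC; congr (b _ * a _); have := ltn_ord i; rewrite /=; subst k; move=> hi; idtac.
 - lia.
 - lia.
Qed.

Lemma sadd_bnd a b N : bnd a N -> bnd b N -> bnd (sadd a b) N.
Proof. by move=> ha hb p hp; rewrite /sadd ha ?hb ?addr0. Qed.

Lemma smulDl a b c N M : bnd a N -> bnd b N -> bnd c M ->
  forall n, smul (sadd a b) c n = smul a c n + smul b c n.
Proof.
move=> ha hb hc n.
pose k := (`|(N + M - n)%R|%N).+1.
rewrite (@smulE _ c N M n (n - M) k) ; try side; last exact: sadd_bnd.
rewrite (@smulE a c N M n (n - M) k) ; try side.
rewrite (@smulE b c N M n (n - M) k) ; try side.
by rewrite /wsum -big_split; apply: eq_bigr => i _; rewrite /sadd mulrDl.
Qed.

Lemma smulA a b c N : bnd a N -> bnd b N -> bnd c N ->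
  forall n, smul (smul a b) c n = smul a (smul b c) n.
Proof.
move=> ha0 hb0 hc0 n.
pose B := `|N|%N%:Z.
have ha : bnd a B by apply: bnd_mono ha0; rewrite /B; lia.
have hb : bnd b B by apply: bnd_mono hb0; rewrite /B; lia.
have hc : bnd c B by apply: bnd_mono hc0; rewrite /B; lia.
have hB : 0 <= B by rewrite /B; lia.
pose K := (`|(4 * B - n)%R|%N).+1.
have hab := @smul_bnd a b B B ha hb; have hbc := @smul_bnd b c B B hb hc.
rewrite (@smulE _ c (B + B) B n (n - 2 * B) K) ; try side.
rewrite (@smulE a _ B (B + B) n (n - 3 * B) K) ; try side.
rewrite /wsum.
transitivity (\sum_(i < K) \sum_(j < K)
   a (n - 3 * B + j%:Z) * (b (B + i%:Z - j%:Z) * c (2 * B - i%:Z))).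
  apply: eq_bigr => i _.
  rewrite (@smulE a b B B _ (n - 3 * B) K) ; try side.
  rewrite /wsum mulr_suml; apply: eq_bigr => j _; rewrite -mulrA.
  congr (_ * (b _ * c _)); lia.
rewrite exchange_big /=; apply: eq_bigr => j _.
rewrite (@smulE b c B B _ (B - j%:Z) K) ; try side; last by have := ltn_ord j; lia.
rewrite /wsum mulr_sumr; apply: eq_bigr => i _.
congr (_ * (b _ * c _)); lia.
Qed.

Definition delta (m : int) : ser A := fun n => if n == m then 1 else 0.

Lemma delta_bnd m : bnd (delta m) m.
Proof. by move=> p hp; rewrite /delta; case: eqP => // e; lia. Qed.

Lemma smul_delta a N m : bnd a N -> forall n, smul a (delta m) n = a (n - m).
Proof.
move=> ha n.
rewrite (@smulE a _ N m n (n - m) (`|(N - n + m)%R|%N).+1) ; try side; last exact: delta_bnd.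
rewrite /wsum big_ord_recl /= big1 ?addr0.
  by rewrite /delta; case: eqP => e; [rewrite mulr1; congr a; lia | exfalso; lia].
move=> i _; rewrite /delta; case: eqP => e; [exfalso; move: e; rewrite /bump /=; lia | by rewrite mulr0].
Qed.

End Ser.
Arguments bnd {A}. Arguments delta {A}. Arguments wsum {A}.

Record bser (A : comPzRingType) := BSer { bval : ser A; bval_bnd : bounded_above bval }.
Arguments BSer {A}.
Arguments bval {A}.
Arguments bval_bnd {A}.

Section BS.
Variable A : comPzRingType.
Local Notation R := (bser A).

Lemma bser_eq (x y : R) : (forall n, bval x n = bval y n) -> x = y.
Proof.
case: x => x hx; case: y => y hy /= h.
have e : x = y by apply: functional_extensionality.
subst y; by rewrite (proof_irrelevance _ hx hy).
Qed.

HB.instance Definition _ := gen_eqMixin R.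
HB.instance Definition _ := gen_choiceMixin R.

Lemma zero_bnd : bounded_above (fun _ : int => (0 : A)).
Proof. by exists 0. Qed.
Definition bzero : R := BSer _ zero_bnd.

Lemma sadd_bounded (a b : ser A) : bounded_above a -> bounded_above b -> bounded_above (sadd a b).
Proof.
case=> N ha; case=> M hb; exists (`|N|%N%:Z + `|M|%N%:Z) => p hp.
by rewrite /sadd ha ?hb ?addr0 //; lia.
Qed.
Definition badd (x y : R) : R := BSer _ (sadd_bounded _ _ (bval_bnd x) (bval_bnd y)).

Lemma sopp_bounded (a : ser A) : bounded_above a -> bounded_above (fun n => - a n).
Proof. by case=> N ha; exists N => p hp; rewrite ha ?oppr0. Qed.
Definition bopp (x : R) : R := BSer _ (sopp_bounded _ (bval_bnd x)).

Lemma smul_bounded (a b : ser A) : bounded_above (smul a b).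
Proof.
exists (sbound a + sbound b) => n hn; rewrite /smul ifF //; apply/negbTE; rewrite -ltNge //.
Qed.
Definition bmul (x y : R) : R := BSer _ (smul_bounded (bval x) (bval y)).
Definition bone : R := BSer _ (@bnd_bounded A _ _ (@delta_bnd A 0)).

Lemma baddA : associative badd.
Proof. by move=> x y z; apply: bser_eq => n /=; rewrite /sadd addrA. Qed.
Lemma baddC : commutative badd.
Proof. by move=> x y; apply: bser_eq => n /=; rewrite /sadd addrC. Qed.
Lemma badd0 : left_id bzero badd.
Proof. by move=> x; apply: bser_eq => n /=; rewrite /sadd add0r. Qed.
Lemma baddN : left_inverse bzero bopp badd.
Proof. by move=> x; apply: bser_eq => n /=; rewrite /sadd addNr. Qed.

HB.instance Definition _ := GRing.isZmodule.Build R baddA baddC badd0 baddN.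

Lemma two_bnd (x y : R) : exists N, bnd (bval x) N /\ bnd (bval y) N.
Proof.
case: (bval_bnd x) => N hN; case: (bval_bnd y) => M hM.
exists (`|N|%N%:Z + `|M|%N%:Z); split; [apply: bnd_mono hN|apply: bnd_mono hM]; lia.
Qed.

Lemma bmulA : associative bmul.
Proof.
move=> x y z; apply: bser_eq => n /=.
case: (two_bnd x y) => N [h1 h2]; case: (two_bnd y z) => M [h3 h4].
pose B := `|N|%N%:Z + `|M|%N%:Z.
symmetry; apply: (@smulA A _ _ _ B); [apply: bnd_mono h1|apply: bnd_mono h2|apply: bnd_mono h4]; lia.
Qed.
Lemma bmulC : commutative bmul.
Proof.
move=> x y; apply: bser_eq => n /=.
case: (two_bnd x y) => N [h1 h2]; exact: (@smulC A _ _ N N).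
Qed.
Lemma bmul1 : left_id bone bmul.
Proof.
move=> x; apply: bser_eq => n /=.
case: (two_bnd x x) => N [h1 _].
rewrite (@smulC A _ _ 0 N) ?(@smul_delta A _ N) ?subr0 //; exact: delta_bnd.
Qed.
Lemma bmulDl : left_distributive bmul badd.
Proof.
move=> x y z; apply: bser_eq => n /=.
case: (two_bnd x y) => N [h1 h2]; case: (two_bnd z z) => M [h3 _].
exact: (@smulDl A _ _ _ N M).
Qed.

HB.instance Definition _ := GRing.Zmodule_isComPzRing.Build R bmulA bmulC bmul1 bmulDl.

Lemma bvalD (x y : R) n : bval (x + y) n = bval x n + bval y n. Proof. by []. Qed.
Lemma bvalN (x : R) n : bval (- x) n = - bval x n. Proof. by []. Qed.
Lemma bvalB (x y : R) n : bval (x - y) n = bval x n - bval y n. Proof. by []. Qed.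
Lemma bvalM (x y : R) n : bval (x * y) n = smul (bval x) (bval y) n. Proof. by []. Qed.
Lemma bval0 n : bval (0 : R) n = 0. Proof. by []. Qed.
Lemma bval1 n : bval (1 : R) n = delta 0 n. Proof. by []. Qed.


End BS.

Section Abs.
Variables (R : comPzRingType) (d : hcoord -> R -> R).
Hypothesis dD : forall c a b, d c (a + b) = d c a + d c b.
Hypothesis dM : forall c a b, d c (a * b) = d c a * b + a * d c b.
Variables (L U W : hcoord -> R).
Hypothesis dL : forall c c', d c' (L c) = 0.

Lemma d0 c : d c 0 = 0.
Proof. have h := dD c 0 0; rewrite addr0 in h. have : d c 0 + d c 0 - d c 0 = d c 0 - d c 0 by rewrite -h. by rewrite addrK subrr. Qed.
Lemma dN c a : d c (- a) = - d c a.
Proof. by apply/eqP; rewrite -subr_eq0 opprK -dD addNr d0. Qed.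
Lemma dB c a b : d c (a - b) = d c a - d c b.
Proof. by rewrite dD dN. Qed.

Definition Ve (c : hcoord) (e : hcoord -> R) := L c * e c - U c * e cx - W c * e cy.

Lemma Ve_comm (e : hcoord -> R) (He : forall c c', d c (e c') = d c' (e c)) c1 c2 :
  Ve c1 (fun c => d c (Ve c2 e)) - Ve c2 (fun c => d c (Ve c1 e)) =
  - (Ve c1 (fun c => d c (U c2)) - Ve c2 (fun c => d c (U c1))) * e cx
  - (Ve c1 (fun c => d c (W c2)) - Ve c2 (fun c => d c (W c1))) * e cy.
Proof.
rewrite /Ve !dB !dM !dL.
try rewrite (He c2 c1); try rewrite (He cx c1); try rewrite (He cx c2);
try rewrite (He cy c1); try rewrite (He cy c2); try rewrite (He cy cx).
ring.
Qed.

End Abs.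

Lemma cramer (R : comPzRingType) (P Q a1 b1 a2 b2 : R) :
  a1 * b2 - b1 * a2 = 1 -> P * a1 + Q * b1 = 0 -> P * a2 + Q * b2 = 0 -> P = 0 /\ Q = 0.
Proof.
move=> hJ h1 h2; split.
  have -> : P = P * (a1 * b2 - b1 * a2) by rewrite hJ mulr1.
  have -> : P * (a1 * b2 - b1 * a2) = (P * a1 + Q * b1) * b2 - (P * a2 + Q * b2) * b1 by ring.
  by rewrite h1 h2; ring.
have -> : Q = Q * (a1 * b2 - b1 * a2) by rewrite hJ mulr1.
have -> : Q * (a1 * b2 - b1 * a2) = (P * a2 + Q * b2) * a1 - (P * a1 + Q * b1) * a2 by ring.
by rewrite h1 h2; ring.
Qed.

Section Main.
Variables (A : comPzRingType) (D : hcoord -> A -> A) (X Y : A) (T Z g f : nat -> A).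
Hypothesis HD : coord_diff_ring D X Y T Z.
Local Notation p1 := (phi1 Y Z g).
Local Notation p2 := (phi2 X T f).
Local Notation R := (bser A).

Lemma Dadd c a b : D c (a + b) = D c a + D c b. Proof. by case: HD. Qed.
Lemma Dmul c a b : D c (a * b) = D c a * b + a * D c b. Proof. by case: HD. Qed.
Lemma Dcomm c c' a : D c (D c' a) = D c' (D c a). Proof. by case: HD. Qed.
Lemma Dcoord c c' : D c (coordval X Y T Z c') = if coord_eqb c c' then 1 else 0.
Proof. by case: HD. Qed.
Lemma D0 c : D c 0 = 0. Proof. exact: (@d0 A D Dadd). Qed.
Lemma DN c a : D c (- a) = - D c a. Proof. exact: (@dN A D Dadd). Qed.
Lemma D1 c : D c 1 = 0.
Proof.
have h := Dmul c 1 1; rewrite !mulr1 !mul1r in h.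
have : D c 1 + D c 1 - D c 1 = D c 1 - D c 1 by rewrite -h.
by rewrite addrK subrr.
Qed.
Lemma Dsum c k (F : 'I_k -> A) : D c (\sum_(i < k) F i) = \sum_(i < k) D c (F i).
Proof. exact: (big_morph _ (Dadd c) (D0 c)). Qed.

Lemma sD_bnd c (s : ser A) N : bnd s N -> bnd (sD D c s) N.
Proof. by move=> h p hp; rewrite /sD h ?D0. Qed.

Lemma sD_smul c (a b : ser A) : bounded_above a -> bounded_above b ->
  forall n, D c (smul a b n) = smul (sD D c a) b n + smul a (sD D c b) n.
Proof.
case=> N ha; case=> M hb n.
pose k := (`|(N + M - n)%R|%N).+1.
have hda := @sD_bnd c a N ha; have hdb := @sD_bnd c b M hb.
rewrite (@smulE A a b N M n (n - M) k) ; try side.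
rewrite (@smulE A _ b N M n (n - M) k) ; try side.
rewrite (@smulE A a _ N M n (n - M) k) ; try side.
by rewrite /wsum Dsum -big_split; apply: eq_bigr => i _; rewrite Dmul.
Qed.

Lemma sD_bounded c (s : ser A) : bounded_above s -> bounded_above (sD D c s).
Proof. by case=> N h; exists N; apply: sD_bnd. Qed.

Definition dR c (x : R) : R := BSer _ (@sD_bounded c _ (bval_bnd x)).

Lemma dR_add c x y : dR c (x + y) = dR c x + dR c y.
Proof. by apply: bser_eq => n /=; rewrite /sD /sadd Dadd. Qed.
Lemma dR_mul c x y : dR c (x * y) = dR c x * y + x * dR c y.
Proof. by apply: bser_eq => n /=; rewrite /sD /sadd sD_smul //; apply: bval_bnd. Qed.

Definition lam : R := BSer _ (@bnd_bounded A _ _ (@delta_bnd A 1)).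

Lemma bval_lamX k : bval (lam ^+ k) = delta k.
Proof.
elim: k => [|k IH]; first by [].
apply: functional_extensionality => n.
rewrite exprSr bvalM IH (@smul_delta A _ k 1); last exact: delta_bnd.
rewrite /delta; case: eqP => e1; case: eqP => e2 //; lia.
Qed.

Lemma dR_lamX c k : dR c (lam ^+ k) = 0.
Proof.
apply: bser_eq => n; rewrite /= /sD bval_lamX /delta.
by case: ifP => _; rewrite ?D1 ?D0.
Qed.

Lemma sshift_lam k (x : R) : sshift k (bval x) = bval (lam ^+ k * x).
Proof.
apply: functional_extensionality => n.
case: (bval_bnd x) => N hN.
rewrite bvalM bval_lamX (@smulC A _ _ k N) ?(@smul_delta A _ N) //.
exact: delta_bnd.
Qed.


Definition Nc (c : hcoord) : int := match c with ct j => j%:Z | cz j => j%:Z | _ => 0 end.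

Lemma DY c : D c Y = if coord_eqb c cy then 1 else 0. Proof. exact: (Dcoord c cy). Qed.
Lemma DX c : D c X = if coord_eqb c cx then 1 else 0. Proof. exact: (Dcoord c cx). Qed.
Lemma DT c m : D c (T m) = if coord_eqb c (ct m) then 1 else 0. Proof. exact: (Dcoord c (ct m)). Qed.
Lemma DZ c m : D c (Z m) = if coord_eqb c (cz m) then 1 else 0. Proof. exact: (Dcoord c (cz m)). Qed.

Lemma p1_bnd c : bnd (sD D c p1) (Nc c).
Proof.
move=> p hp; have hp0 : 0 < p by case: c hp => //= *; lia.
rewrite /sD /phi1 ifF; last by apply/eqP; lia.
rewrite hp0 DZ; case: c hp {hp0} => //= j hp; case: eqP => //; lia.
Qed.

Lemma p2_bnd c : bnd (sD D c p2) (Nc c).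
Proof.
move=> p hp; have hp0 : 0 < p by case: c hp => //= *; lia.
rewrite /sD /phi2 ifF; last by apply/eqP; lia.
rewrite hp0 DT; case: c hp {hp0} => //= j hp; case: eqP => //; lia.
Qed.

Definition e1 c : R := BSer _ (@bnd_bounded A _ _ (p1_bnd c)).
Definition e2 c : R := BSer _ (@bnd_bounded A _ _ (p2_bnd c)).

Lemma e1_sym c c' : dR c (e1 c') = dR c' (e1 c).
Proof. by apply: bser_eq => n /=; rewrite /sD Dcomm. Qed.
Lemma e2_sym c c' : dR c (e2 c') = dR c' (e2 c).
Proof. by apply: bser_eq => n /=; rewrite /sD Dcomm. Qed.

Lemma ssub_bounded (a b : ser A) : bounded_above a -> bounded_above b -> bounded_above (ssub a b).
Proof.
case=> N ha; case=> M hb; exists (`|N|%N%:Z + `|M|%N%:Z) => p hp.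
by rewrite /ssub ha ?hb ?subr0 //; lia.
Qed.
Lemma det2_bounded (a b c d : ser A) : bounded_above (det2 a b c d).
Proof. by apply: ssub_bounded; apply: smul_bounded. Qed.
Lemma spos_bounded (a : ser A) : bounded_above a -> bounded_above (spos a).
Proof. by case=> N h; exists N => p hp; rewrite /spos h ?if_same. Qed.

Definition Ucoef c : R :=
  BSer _ (@spos_bounded _ (det2_bounded (lamD D c p1) (lamD D c p2) (sD D cy p1) (sD D cy p2))).
Definition Wcoef c : R :=
  BSer _ (@spos_bounded _ (det2_bounded (lamD D c p2) (lamD D c p1) (sD D cx p2) (sD D cx p1))).
Definition Lc c : R := lam ^+ nz c.
Definition J a b : R := e1 a * e2 b - e1 b * e2 a.

Lemma lamD_e1 c : lamD D c p1 = bval (Lc c * e1 c).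
Proof. exact: (sshift_lam (nz c) (e1 c)). Qed.
Lemma lamD_e2 c : lamD D c p2 = bval (Lc c * e2 c).
Proof. exact: (sshift_lam (nz c) (e2 c)). Qed.

Lemma det2_val (a b c d : R) : det2 (bval a) (bval b) (bval c) (bval d) = bval (a * d - b * c).
Proof. by []. Qed.

Lemma spos_eq (s : ser A) n : sneg s n = 0 -> spos s n = s n.
Proof. by rewrite /spos /sneg; case: (lerP 0 n) => // _ ->. Qed.


Hypothesis HF : DF_hierarchy D p1 p2.

Lemma jac_J a b : jac D p1 p2 a b = bval (J a b).
Proof. by []. Qed.

Lemma HFJ a b : valid_coord a -> valid_coord b -> forall n,
  sneg (bval (lam ^+ (nz a + nz b) * J a b)) n = 0.
Proof. by move=> ha hb n; rewrite -sshift_lam -jac_J; apply: HF. Qed.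

Lemma Ucoef_eq c : valid_coord c -> Ucoef c = Lc c * J c cy.
Proof.
move=> hc; apply: bser_eq => n.
rewrite /Ucoef /= lamD_e1 lamD_e2.
change (sD D cy p1) with (bval (e1 cy)); change (sD D cy p2) with (bval (e2 cy)).
rewrite det2_val.
have -> : Lc c * e1 c * e2 cy - Lc c * e2 c * e1 cy = Lc c * J c cy by rewrite /J; ring.
apply: spos_eq; have := @HFJ c cy hc (erefl true) n; by rewrite /= addn0.
Qed.

Lemma Wcoef_eq c : valid_coord c -> Wcoef c = Lc c * J cx c.
Proof.
move=> hc; apply: bser_eq => n.
rewrite /Wcoef /= lamD_e1 lamD_e2.
change (sD D cx p1) with (bval (e1 cx)); change (sD D cx p2) with (bval (e2 cx)).
rewrite det2_val.
have -> : Lc c * e2 c * e1 cx - Lc c * e1 c * e2 cx = Lc c * J cx c by rewrite /J; ring.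
apply: spos_eq; have := @HFJ cx c (erefl true) hc n; by rewrite /= add0n.
Qed.

Lemma bndR_mul (x y : R) N M : bnd (bval x) N -> bnd (bval y) M -> bnd (bval (x * y)) (N + M).
Proof. exact: smul_bnd. Qed.
Lemma bndR_add (x y : R) N : bnd (bval x) N -> bnd (bval y) N -> bnd (bval (x + y)) N.
Proof. by move=> hx hy p hp; rewrite bvalD hx ?hy ?addr0. Qed.
Lemma bndR_opp (x : R) N : bnd (bval x) N -> bnd (bval (- x)) N.
Proof. by move=> hx p hp; rewrite bvalN hx ?oppr0. Qed.

Lemma Jxy : J cx cy = 1.
Proof.
have E : J cx cy = 1 + (e1 cx * e2 cy - (e1 cy + 1) * (e2 cx - 1) - (e1 cy + 1) + (e2 cx - 1)).
  by rewrite /J; ring.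
have h1 : bnd (bval (e1 cx)) (-1).
  move=> p hp; rewrite /= /sD /phi1; case: ifP => [_|/eqP hp0].
    by rewrite DN DY /= oppr0.
  by rewrite ifT ?DZ //; lia.
have h2 : bnd (bval (e2 cy)) (-1).
  move=> p hp; rewrite /= /sD /phi2; case: ifP => [_|/eqP hp0].
    by rewrite DX.
  by rewrite ifT ?DT //; lia.
have h3 : bnd (bval (e1 cy + 1)) (-1).
  move=> p hp; rewrite bvalD bval1 /= /sD /phi1 /delta; case: ifP => [_|/eqP hp0].
    by rewrite DN DY /= addNr.
  by rewrite ifT ?DZ ?addr0 //; lia.
have h4 : bnd (bval (e2 cx - 1)) (-1).
  move=> p hp; rewrite bvalB bval1 /= /sD /phi2 /delta; case: ifP => [_|/eqP hp0].
    by rewrite DX /= subrr.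
  by rewrite ifT ?DT ?subr0 //; lia.
have hE : bnd (bval (e1 cx * e2 cy - (e1 cy + 1) * (e2 cx - 1) - (e1 cy + 1) + (e2 cx - 1))) (-1).
  apply: bndR_add; last exact: h4.
  apply: bndR_add; last exact: bndR_opp.
  apply: bndR_add.
    by apply: (@bnd_mono A _ _ _ _ (@bndR_mul _ _ _ _ h1 h2)); lia.
  by apply: bndR_opp; apply: (@bnd_mono A _ _ _ _ (@bndR_mul _ _ _ _ h3 h4)); lia.
apply: bser_eq => n; case: (ltrP n 0) => hn.
  have := @HFJ cx cy (erefl true) (erefl true) n; rewrite /sneg hn; change (nz cx + nz cy)%N with 0%N; rewrite expr0 mul1r => ->.
  by rewrite bval1 /delta ifF //; apply/eqP; lia.
by rewrite E bvalD hE ?addr0 //; lia.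
Qed.


Definition VV c (e : hcoord -> R) : R := @Ve R Lc Ucoef Wcoef c e.

Lemma VF_val c (s : ser A) (G : hcoord -> R) : (forall c', bval (G c') = sD D c' s) ->
  VF D p1 p2 c s = bval (VV c G).
Proof.
move=> hG; apply: functional_extensionality => n.
rewrite /VF /ssub /lamD -!hG sshift_lam /VV /Ve !bvalB !bvalM.
by [].
Qed.

Lemma VV_e1 c : valid_coord c -> VV c e1 = 0.
Proof.
move=> hc.
have h : VV c e1 = Lc c * (e1 c * J cx cy - J c cy * e1 cx - J cx c * e1 cy).
  by rewrite /VV /Ve Ucoef_eq // Wcoef_eq // Jxy; ring.
by rewrite h /J; ring.
Qed.

Lemma VV_e2 c : valid_coord c -> VV c e2 = 0.
Proof.
move=> hc.
have h : VV c e2 = Lc c * (e2 c * J cx cy - J c cy * e2 cx - J cx c * e2 cy).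
  by rewrite /VV /Ve Ucoef_eq // Wcoef_eq // Jxy; ring.
by rewrite h /J; ring.
Qed.

Lemma dL c c' : dR c' (Lc c) = 0.
Proof. exact: dR_lamX. Qed.

Lemma VV_comm e (He : forall c c', dR c (e c') = dR c' (e c)) c1 c2 :
  VV c1 (fun c => dR c (VV c2 e)) - VV c2 (fun c => dR c (VV c1 e)) =
  - (VV c1 (fun c => dR c (Ucoef c2)) - VV c2 (fun c => dR c (Ucoef c1))) * e cx
  - (VV c1 (fun c => dR c (Wcoef c2)) - VV c2 (fun c => dR c (Wcoef c1))) * e cy.
Proof. exact: (@Ve_comm R dR dR_add dR_mul Lc Ucoef Wcoef dL e He c1 c2). Qed.

Lemma dR0 c : dR c 0 = 0.
Proof. exact: (@d0 R dR dR_add). Qed.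

Lemma VV_comm0 c1 c2 : valid_coord c1 -> valid_coord c2 -> forall u : R,
  VV c1 (fun c => dR c (VV c2 (fun c' => dR c' u))) =
  VV c2 (fun c => dR c (VV c1 (fun c' => dR c' u))).
Proof.
move=> h1 h2 u.
set P := VV c1 (fun c => dR c (Ucoef c2)) - VV c2 (fun c => dR c (Ucoef c1)).
set Q := VV c1 (fun c => dR c (Wcoef c2)) - VV c2 (fun c => dR c (Wcoef c1)).
have H1 : P * e1 cx + Q * e1 cy = 0.
  have := @VV_comm e1 e1_sym c1 c2; rewrite VV_e1 // VV_e1 //.
  rewrite -/P -/Q /VV /Ve !dR0 => h.
  have h' : - P * e1 cx - Q * e1 cy = 0 by rewrite -h; ring.
  transitivity (- (- P * e1 cx - Q * e1 cy)); [ring | by rewrite h' oppr0].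
have H2 : P * e2 cx + Q * e2 cy = 0.
  have := @VV_comm e2 e2_sym c1 c2; rewrite VV_e2 // VV_e2 //.
  rewrite -/P -/Q /VV /Ve !dR0 => h.
  have h' : - P * e2 cx - Q * e2 cy = 0 by rewrite -h; ring.
  transitivity (- (- P * e2 cx - Q * e2 cy)); [ring | by rewrite h' oppr0].
have [hP hQ] := @cramer R _ _ _ _ _ _ Jxy H1 H2.
apply/eqP; rewrite -subr_eq0; apply/eqP.
rewrite VV_comm; last by move=> c c'; apply: bser_eq => n /=; rewrite /sD Dcomm.
by rewrite -/P -/Q hP hQ; ring.
Qed.


Lemma comm_gen c1 c2 : valid_coord c1 -> valid_coord c2 ->
  vf_commute (VF D p1 p2 c1) (VF D p1 p2 c2).
Proof.
move=> h1 h2 u hu k.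
pose ub : R := BSer u hu.
rewrite (@VF_val c2 u (fun c => dR c ub)); last by [].
rewrite (@VF_val c1 u (fun c => dR c ub)); last by [].
rewrite (@VF_val c1 _ (fun c => dR c (VV c2 (fun c' => dR c' ub)))); last by [].
rewrite (@VF_val c2 _ (fun c => dR c (VV c1 (fun c' => dR c' ub)))); last by [].
rewrite (@VV_comm0 c1 c2 h1 h2); reflexivity.
Qed.

Lemma zero_gen c : valid_coord c -> forall k,
  VF D p1 p2 c p1 k = 0 /\ VF D p1 p2 c p2 k = 0.
Proof.
move=> hc k; rewrite (@VF_val c p1 e1); last by [].
rewrite (@VF_val c p2 e2); last by [].
rewrite (@VV_e1 c hc) (@VV_e2 c hc); split; reflexivity.
Qed.

Lemma main_sec :
  [/\ (forall n : nat, (0 < n)%N -> forall k : int,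
         Tvf D p1 p2 n p1 k = 0 /\ Tvf D p1 p2 n p2 k = 0),
      (forall j : nat, (0 < j)%N -> forall k : int,
         Zvf D p1 p2 j p1 k = 0 /\ Zvf D p1 p2 j p2 k = 0),
      (forall n s : nat, (0 < n)%N -> (0 < s)%N ->
         vf_commute (Tvf D p1 p2 n) (Tvf D p1 p2 s)),
      (forall n j : nat, (0 < n)%N -> (0 < j)%N ->
         vf_commute (Tvf D p1 p2 n) (Zvf D p1 p2 j)) &
      (forall i j : nat, (0 < i)%N -> (0 < j)%N ->
         vf_commute (Zvf D p1 p2 i) (Zvf D p1 p2 j))].
Proof.
split.
- move=> n hn; exact: (@zero_gen (ct n) hn).
- move=> n hn; exact: (@zero_gen (cz n) hn).
- move=> n s hn hs; exact: (@comm_gen (ct n) (ct s) hn hs).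
- move=> n s hn hs; exact: (@comm_gen (ct n) (cz s) hn hs).
- move=> n s hn hs; exact: (@comm_gen (cz n) (cz s) hn hs).
Qed.

End Main.


Theorem mainTheorem2 (A : comPzRingType) (D : hcoord -> A -> A) (X Y : A)
    (T Z : nat -> A) (g f : nat -> A) :
  coord_diff_ring D X Y T Z ->
  DF_hierarchy D (phi1 Y Z g) (phi2 X T f) ->
  let p1 := phi1 Y Z g in let p2 := phi2 X T f in
  [/\ (forall n : nat, (0 < n)%N -> forall k : int,
         Tvf D p1 p2 n p1 k = 0 /\ Tvf D p1 p2 n p2 k = 0),
      (forall j : nat, (0 < j)%N -> forall k : int,
         Zvf D p1 p2 j p1 k = 0 /\ Zvf D p1 p2 j p2 k = 0),
      (forall n s : nat, (0 < n)%N -> (0 < s)%N ->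
         vf_commute (Tvf D p1 p2 n) (Tvf D p1 p2 s)),
      (forall n j : nat, (0 < n)%N -> (0 < j)%N ->
         vf_commute (Tvf D p1 p2 n) (Zvf D p1 p2 j)) &
      (forall i j : nat, (0 < i)%N -> (0 < j)%N ->
         vf_commute (Zvf D p1 p2 i) (Zvf D p1 p2 j))].
Proof. move=> HD HF p1 p2. exact: (@main_sec A D X Y T Z g f HD HF). Qed.
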